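(* Let $q\in[0,1)$, $a\in\mathbb D$, $b_a(z)=\frac{z-a}{1-z\overline a}$ and $b_{a,q}(z)=b_a(\sqrt{1-q}\,z)$. Then the operator $M_{b_{a,q}}$ of multiplication by $b_{a,q}$ is a contraction from $\mathbf H_{2,q}$ into itself; equivalently, the kernel $(1-b_{a,q}(z)\overline{b_{a,q}(w)})E_q(z\overline w)$ is positive definite on $|z|,|w|<1/\sqrt{1-q}$.
   Context: $[0]_q=1$, $[k]_q=1+q+\cdots+q^{k-1}$ ($k\ge1$), $[k]_q!=\prod_{j=1}^k[j]_q$, $[0]_q!=1$. $E_q(x)=\sum_{k\ge0}x^k/[k]_q!=\prod_{j=0}^\infty(1-(1-q)q^jx)^{-1}$ for $|x|<1/(1-q)$. $\mathbf H_{2,q}$ is the reproducing kernel Hilbert space with kernel $E_q(z\overline w)$, consisting of power series $\sum_k a_kz^k$ with $\sum_k[k]_q!|a_k|^2<\infty$; its elements are analytic in $|z|<1/\sqrt{1-q}$. *)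

(* Defs.v *)
From Stdlib Require Import Reals.
From Coquelicot Require Import Coquelicot.
Open Scope R_scope.

Fixpoint qint (q : R) (k : nat) : R :=
  match k with
  | O => 0
  | S k' => qint q k' + q ^ k'
  end.

Fixpoint qfact (q : R) (k : nat) : R :=
  match k with
  | O => 1
  | S k' => qfact q k' * qint q (S k')
  end.

Definition Eq (q : R) (x : C) : C :=
  (Series (fun k => Re (Cdiv (Cpow x k) (RtoC (qfact q k)))),
   Series (fun k => Im (Cdiv (Cpow x k) (RtoC (qfact q k))))).

Definition blaschke (a z : C) : C :=
  Cdiv (Cminus z a) (Cminus 1 (Cmult z (Cconj a))).

Definition blaschke_q (a : C) (q : R) (z : C) : C :=
  blaschke a (Cmult (RtoC (sqrt (1 - q))) z).

Definition kernel_bq (a : C) (q : R) (z w : C) : C :=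
  Cmult (Cminus 1 (Cmult (blaschke_q a q z) (Cconj (blaschke_q a q w))))
        (Eq q (Cmult z (Cconj w))).

Definition pos_def_kernel (D : C -> Prop) (K : C -> C -> C) : Prop :=
  forall (n : nat) (z c : nat -> C),
    (forall i, (i <= n)%nat -> D (z i)) ->
    let s := sum_n (fun i => sum_n (fun j =>
                 Cmult (Cmult (c i) (Cconj (c j))) (K (z i) (z j))) n) n in
    Im s = 0 /\ 0 <= Re s.

(* Main.v *)
Require Import Defs.
From Stdlib Require Import Reals Lra Lia.
From Coquelicot Require Import Coquelicot.
Open Scope R_scope.

Lemma qint_nonneg q n : 0 <= q -> 0 <= qint q n.
Proof. intros Hq; induction n; simpl. lra. pose proof (pow_le q n Hq). lra. Qed.

Lemma qint_S_ge1 q n : 0 <= q -> 1 <= qint q (S n).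
Proof. intros Hq; induction n. simpl. lra. change (qint q (S (S n))) with (qint q (S n) + q ^ (S n)).
  pose proof (pow_le q (S n) Hq). lra. Qed.

Lemma qint_closed q n : qint q n * (1 - q) = 1 - q ^ n.
Proof. induction n; simpl. ring. rewrite Rmult_plus_distr_r, IHn. ring. Qed.

Lemma qfact_pos q n : 0 <= q -> 0 < qfact q n.
Proof. intros Hq; induction n; simpl. lra. pose proof (qint_S_ge1 q n Hq).
  apply Rmult_lt_0_compat; simpl in *; lra. Qed.

Lemma L1 q r : 0 <= q < 1 -> 0 < r -> r * (1 - q) < 1 ->
  ex_series (fun k => r ^ k / qfact q k).
Proof.
  intros Hq Hr Hrq.
  apply ex_series_ext with (a := fun k => Rabs (r ^ k / qfact q k)).
  { intro k. apply Rabs_pos_eq. apply Rmult_le_pos. apply pow_le; lra.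
    apply Rlt_le, Rinv_0_lt_compat, qfact_pos; lra. }
  apply ex_series_DAlembert with (k := r * (1 - q)); auto.
  { intro n. apply Rgt_not_eq. apply Rdiv_lt_0_compat. apply pow_lt; lra. apply qfact_pos; lra. }
  apply is_lim_seq_ext with (u := fun n => (r * (1 - q)) / (1 - q ^ (S n))).
  { intro n. pose proof (qfact_pos q n (proj1 Hq)).
    pose proof (qint_S_ge1 q n (proj1 Hq)).
    rewrite <- (qint_closed q (S n)).
    change (qfact q (S n)) with (qfact q n * qint q (S n)).
    rewrite Rabs_pos_eq.
    - change (r ^ S n) with (r * r ^ n). field. repeat split; try lra; apply pow_nonzero; lra.
    - apply Rlt_le. unfold Rdiv. repeat (apply Rmult_lt_0_compat || apply Rinv_0_lt_compat); try apply pow_lt; lra. }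
  replace (Finite (r * (1 - q))) with (Finite (r * (1 - q) / (1 - 0))) by (f_equal; field).
  apply is_lim_seq_div'.
  apply is_lim_seq_const.
  apply is_lim_seq_minus'. apply is_lim_seq_const.
  apply (is_lim_seq_incr_1 (fun n => q ^ n) 0).
  apply is_lim_seq_geom. rewrite Rabs_pos_eq; lra. lra.
Qed.

Definition tq (q : R) (x : C) (k : nat) : C := Cdiv (Cpow x k) (RtoC (qfact q k)).

Definition CS (t : nat -> C) (L : C) :=
  is_series (fun k => Re (t k)) (Re L) /\ is_series (fun k => Im (t k)) (Im L).

Lemma Im_le_Cmod c : Rabs (Im c) <= Cmod c.
Proof. pose proof (Rmax_Cmod c). pose proof (Rmax_r (Rabs (fst c)) (Rabs (snd c))).
  unfold Im. lra. Qed.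

Lemma RtoC_nz r : r <> 0 -> RtoC r <> 0%C.
Proof. intros H E. apply H. injection E. auto. Qed.

Lemma Cmod_tq q x k : 0 <= q -> Cmod (tq q x k) = Cmod x ^ k / qfact q k.
Proof. intro Hq. unfold tq. rewrite Cmod_div, Cmod_pow, Cmod_R.
  rewrite Rabs_pos_eq; auto. apply Rlt_le, qfact_pos; auto.
  apply RtoC_nz. apply Rgt_not_eq, qfact_pos; auto. Qed.

Lemma L2 q x : 0 <= q < 1 -> Cmod x * (1 - q) < 1 -> CS (tq q x) (Eq q x).
Proof.
  intros Hq Hx.
  set (r := (Cmod x + 1 / (1 - q)) / 2).
  assert (Hr : Cmod x < r /\ r * (1 - q) < 1).
  { assert (Cmod x < 1 / (1 - q)).
    { apply (Rmult_lt_reg_r (1 - q)). lra. unfold Rdiv. rewrite Rmult_assoc, Rinv_l; lra. }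
    unfold r. split. lra.
    replace ((Cmod x + 1 / (1 - q)) / 2 * (1 - q)) with ((Cmod x * (1 - q) + 1)/2) by (field; lra). lra. }
  pose proof (Cmod_ge_0 x).
  assert (Hb : ex_series (fun k => r ^ k / qfact q k)) by (apply L1; lra).
  assert (Hbd : forall k, Cmod (tq q x k) <= r ^ k / qfact q k).
  { intro k. rewrite Cmod_tq by lra. unfold Rdiv. apply Rmult_le_compat_r.
    apply Rlt_le, Rinv_0_lt_compat, qfact_pos; lra. apply pow_incr; lra. }
  split; apply Series_correct.
  - apply (ex_series_le (K:=R_AbsRing) (V:=R_CompleteNormedModule)) with (b := fun k => r ^ k / qfact q k); auto.
    intro k. eapply Rle_trans. apply re_le_Cmod. apply Hbd.
  - apply (ex_series_le (K:=R_AbsRing) (V:=R_CompleteNormedModule)) with (b := fun k => r ^ k / qfact q k); auto.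
    intro k. eapply Rle_trans. apply Im_le_Cmod. apply Hbd.
Qed.

Lemma is_series_lin (a b : nat -> R) la lb al be :
  is_series a la -> is_series b lb ->
  is_series (fun n => al * a n + be * b n) (al * la + be * lb).
Proof.
  intros Ha Hb. apply (is_series_plus _ _ _ _ (is_series_scal al _ _ Ha) (is_series_scal be _ _ Hb)).
Qed.

Lemma CS_scal w t L : CS t L -> CS (fun k => Cmult w (t k)) (Cmult w L).
Proof.
  intros [H1 H2]. destruct w as [w1 w2]. destruct L as [l1 l2]. simpl in H1, H2. split.
  - simpl. replace (w1 * l1 - w2 * l2) with (w1 * l1 + - w2 * l2) by ring.
    eapply is_series_ext; [|apply (is_series_lin _ _ _ _ w1 (- w2) H1 H2)].
    intro n. simpl. destruct (t n); simpl. ring.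
  - simpl. replace (w1 * l2 + w2 * l1) with (w1 * l2 + w2 * l1) by ring.
    eapply is_series_ext; [|apply (is_series_lin _ _ _ _ w1 w2 H2 H1)].
    intro n. simpl. destruct (t n); simpl. ring.
Qed.

Lemma CS_plus t1 t2 L1 L2 : CS t1 L1 -> CS t2 L2 -> CS (fun k => Cplus (t1 k) (t2 k)) (Cplus L1 L2).
Proof.
  intros [H1 H2] [H3 H4]. destruct L1, L2. simpl in *. split; simpl;
  match goal with |- is_series _ (?x + ?y) => replace (x+y) with (1*x+1*y) by ring end.
  - eapply is_series_ext; [|apply (is_series_lin _ _ _ _ 1 1 H1 H3)].
    intro n. simpl. destruct (t1 n), (t2 n); simpl; ring.
  - eapply is_series_ext; [|apply (is_series_lin _ _ _ _ 1 1 H2 H4)].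
    intro n. simpl. destruct (t1 n), (t2 n); simpl; ring.
Qed.

Lemma CS_ext t t' L L' : (forall k, t k = t' k) -> L = L' -> CS t L -> CS t' L'.
Proof. intros H E [H1 H2]. subst. split; eapply is_series_ext; eauto; intro; simpl; rewrite H; auto. Qed.

Lemma CS_sum n (t : nat -> nat -> C) (L : nat -> C) :
  (forall i, (i <= n)%nat -> CS (t i) (L i)) ->
  CS (fun k => sum_n (fun i => t i k) n) (sum_n L n).
Proof.
  induction n; intro H.
  - apply (CS_ext (t 0%nat) _ (L 0%nat) _); [intro k; rewrite sum_O; reflexivity | rewrite sum_O; reflexivity | apply H; lia].
  - apply (CS_ext (fun k => Cplus (sum_n (fun i => t i k) n) (t (S n) k)) _ (Cplus (sum_n L n) (L (S n))) _);
      [intro k; rewrite sum_Sn; reflexivity | rewrite sum_Sn; reflexivity | ].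
    apply (CS_plus (fun k => sum_n (fun i => t i k) n) (fun k => t (S n) k)).
    apply IHn. intros; apply H; lia. apply H; lia.
Qed.

Lemma sum_ext_loc n (f g : nat -> C) : (forall i, (i <= n)%nat -> f i = g i) -> sum_n f n = sum_n g n.
Proof.
  induction n; intro H. rewrite !sum_O. apply H; lia.
  rewrite !sum_Sn. rewrite IHn. rewrite H; auto. intros; apply H; lia.
Qed.

Lemma sum_lin n (f g : nat -> C) (al be : C) :
  sum_n (fun i => Cplus (Cmult al (f i)) (Cmult be (g i))) n =
  Cplus (Cmult al (sum_n f n)) (Cmult be (sum_n g n)).
Proof.
  induction n. rewrite !sum_O. reflexivity.
  rewrite !sum_Sn, IHn. change plus with Cplus. simpl. ring.
Qed.

Lemma sum_scal n (f : nat -> C) (w : C) :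
  sum_n (fun i => Cmult w (f i)) n = Cmult w (sum_n f n).
Proof.
  induction n. rewrite !sum_O. reflexivity.
  rewrite !sum_Sn, IHn. change plus with Cplus. simpl. ring.
Qed.

Lemma sum_conj n (f : nat -> C) : Cconj (sum_n f n) = sum_n (fun i => Cconj (f i)) n.
Proof.
  induction n. rewrite !sum_O. reflexivity.
  rewrite !sum_Sn, <- IHn. change plus with Cplus. simpl. apply Cplus_conj.
Qed.

Lemma sum_herm n (al : nat -> C) :
  sum_n (fun i => sum_n (fun j => Cmult (al i) (Cconj (al j))) n) n =
  RtoC (Cmod (sum_n al n) ^ 2).
Proof.
  rewrite Cmod2_conj.
  rewrite (sum_n_ext _ (fun i => Cmult (Cconj (sum_n al n)) (al i))).
  rewrite sum_scal. apply Cmult_comm.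
  intro i. rewrite sum_scal, sum_conj. apply Cmult_comm.
Qed.

Lemma Cconj_R (r : R) : Cconj (RtoC r) = RtoC r.
Proof. unfold Cconj, RtoC; simpl. f_equal. ring. Qed.

Lemma Cconj_1 : Cconj 1 = 1%C.
Proof. apply Cconj_R. Qed.

Lemma P_id q (a zi zj ci cj : C) k :
  0 <= q < 1 ->
  Cminus 1 (Cmult (Cmult (RtoC (sqrt (1 - q))) zi) (Cconj a)) <> 0%C ->
  Cminus 1 (Cmult (Cmult (RtoC (sqrt (1 - q))) zj) (Cconj a)) <> 0%C ->
  let di := Cmult ci (Cinv (Cminus 1 (Cmult (Cmult (RtoC (sqrt (1 - q))) zi) (Cconj a)))) in
  let dj := Cmult cj (Cinv (Cminus 1 (Cmult (Cmult (RtoC (sqrt (1 - q))) zj) (Cconj a)))) in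
  let x := Cmult zi (Cconj zj) in
  Cmult (Cmult (Cmult ci (Cconj cj))
     (Cminus 1 (Cmult (blaschke_q a q zi) (Cconj (blaschke_q a q zj))))) (tq q x k)
  = Cplus (Cmult (RtoC (1 - Cmod a ^ 2)) (Cmult (Cmult di (Cconj dj)) (tq q x k)))
          (Cmult (RtoC (- (1 - Cmod a ^ 2) * (1 - q ^ (S k))))
                 (Cmult (Cmult di (Cconj dj)) (tq q x (S k)))).
Proof.
  intros Hq Hi Hj di dj x.
  set (s := sqrt (1 - q)).
  assert (Hs : s * s = 1 - q) by (apply sqrt_sqrt; lra).
  assert (Hj' : Cminus 1 (Cmult (Cmult (RtoC s) (Cconj zj)) a) <> 0%C).
  { intro E. apply Hj. rewrite <- (Cconj_conj (Cminus 1 _)).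
    rewrite Cminus_conj, !Cmult_conj, Cconj_1, Cconj_R, Cconj_conj. fold s. rewrite E.
    apply Cconj_R. }
  pose proof (qfact_pos q k (proj1 Hq)) as Hf.
  pose proof (qint_S_ge1 q k (proj1 Hq)) as Hqi.
  unfold di, dj, x, blaschke_q, blaschke, tq. fold s in Hi, Hj |- *.
  rewrite Cdiv_conj by exact Hj.
  rewrite !Cmult_conj.
  rewrite Cinv_conj by exact Hj.
  rewrite !Cminus_conj, !Cmult_conj, Cconj_1, Cconj_R, !Cconj_conj.
  rewrite Cpow_S.
  change (qfact q (S k)) with (qfact q k * qint q (S k)).
  rewrite <- (qint_closed q (S k)). rewrite <- Hs.
  set (X := Cpow (Cmult zi (Cconj zj)) k).
  rewrite ?RtoC_mult, ?RtoC_opp, ?RtoC_minus, ?RtoC_mult, Cmod2_conj.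
  field.
  repeat split; auto; apply RtoC_nz; lra.
Qed.

Lemma final_ineq (U : nat -> R) (A q : R) (l : R) :
  0 <= q < 1 -> 0 <= A -> (forall k, 0 <= U k) -> ex_series U ->
  is_series (fun k => A * U k + (- A * (1 - q ^ (S k))) * U (S k)) l -> 0 <= l.
Proof.
  intros Hq HA HU HUs Hl.
  set (V := fun k => (1 - q ^ (S k)) * U (S k)).
  assert (HV : forall k, 0 <= V k <= U (S k)).
  { intro k. unfold V. pose proof (pow_lt_1_compat q (S k) Hq ltac:(lia)). pose proof (HU (S k)).
    split. apply Rmult_le_pos; lra. rewrite <- (Rmult_1_l (U (S k))) at 2.
    apply Rmult_le_compat_r; lra. }
  assert (HUS : ex_series (fun k => U (S k))) by (apply (proj1 (ex_series_incr_1 (K:=R_AbsRing) (V:=R_NormedModule) U)); auto).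
  assert (HVs : ex_series V).
  { apply (ex_series_le (K:=R_AbsRing) (V:=R_CompleteNormedModule)) with (b := fun k => U (S k)); auto.
    intro k. change (norm (V k)) with (Rabs (V k)). rewrite Rabs_pos_eq; apply HV. }
  rewrite <- (is_series_unique _ _ Hl).
  rewrite (Series_ext _ (fun k => A * (U k - V k))) by (intro k; unfold V; ring).
  rewrite Series_scal_l, Series_minus by auto.
  rewrite (Series_incr_1 U HUs).
  pose proof (Series_le V (fun k => U (S k)) HV HUS). pose proof (HU 0%nat).
  apply Rmult_le_pos; lra.
Qed.

Lemma Im_zero (l : R) : is_series (fun _ : nat => 0) l -> l = 0.
Proof.
  intro H. rewrite <- (is_series_unique _ _ H).
  assert (H0 : is_series (fun n : nat => 0 * 0) (0 * l)) by apply (is_series_scal (V:=R_NormedModule) 0 _ _ H).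
  replace (0 * l) with 0 in H0 by ring.
  apply (is_series_ext _ (fun _ => 0)) in H0. apply (is_series_unique _ _ H0).
  intro; simpl; ring.
Qed.

Theorem proposition8p1 (q : R) (a : C) :
  0 <= q < 1 -> Cmod a < 1 ->
  pos_def_kernel (fun z => Cmod z < 1 / sqrt (1 - q)) (kernel_bq a q).
Proof.
  intros Hq Ha n z c Hz s.
  set (s0 := sqrt (1 - q)).
  assert (Hs0 : 0 < s0) by (apply sqrt_lt_R0; lra).
  assert (Hss : s0 * s0 = 1 - q) by (apply sqrt_sqrt; lra).
  pose proof (Cmod_ge_0 a) as Ha0.
  assert (Hzb : forall i, (i <= n)%nat -> s0 * Cmod (z i) < 1 /\ 0 <= Cmod (z i)).
  { intros i Hi. pose proof (Hz i Hi) as H. fold s0 in H. split.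
    apply (Rmult_lt_reg_r (/ s0)). apply Rinv_0_lt_compat; lra.
    replace (s0 * Cmod (z i) * / s0) with (Cmod (z i)) by (field; lra). lra.
    apply Cmod_ge_0. }
  assert (Hden : forall i, (i <= n)%nat ->
     Cminus 1 (Cmult (Cmult (RtoC s0) (z i)) (Cconj a)) <> 0%C).
  { intros i Hi E. destruct (Hzb i Hi) as [H1 H2].
    assert (E' : Cmult (Cmult (RtoC s0) (z i)) (Cconj a) = 1%C).
    { set (w := Cmult (Cmult (RtoC s0) (z i)) (Cconj a)) in *.
      replace w with (Cminus 1 (Cminus 1 w)) by ring. rewrite E. ring. }
    assert (Cmod (Cmult (Cmult (RtoC s0) (z i)) (Cconj a)) < 1).
    { rewrite !Cmod_mult, Cmod_conj, Cmod_R, Rabs_pos_eq by lra.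
      apply Rle_lt_trans with (s0 * Cmod (z i) * 1). apply Rmult_le_compat_l.
      apply Rmult_le_pos; lra. lra. lra. }
    rewrite E', Cmod_1 in H. lra. }
  assert (Hx : forall i j, (i <= n)%nat -> (j <= n)%nat ->
     Cmod (Cmult (z i) (Cconj (z j))) * (1 - q) < 1).
  { intros i j Hi Hj. destruct (Hzb i Hi), (Hzb j Hj).
    rewrite Cmod_mult, Cmod_conj, <- Hss.
    replace (Cmod (z i) * Cmod (z j) * (s0 * s0)) with ((s0 * Cmod (z i)) * (s0 * Cmod (z j))) by ring.
    assert (0 <= s0 * Cmod (z i)) by (apply Rmult_le_pos; lra).
    assert (0 <= s0 * Cmod (z j)) by (apply Rmult_le_pos; lra). nra. }
  set (A := fun i j => Cmult (Cmult (c i) (Cconj (c j)))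
       (Cminus 1 (Cmult (blaschke_q a q (z i)) (Cconj (blaschke_q a q (z j)))))).
  set (tau := fun k => sum_n (fun i => sum_n (fun j =>
       Cmult (A i j) (tq q (Cmult (z i) (Cconj (z j))) k)) n) n).
  assert (Htau : CS tau s).
  { apply (CS_ext tau _ (sum_n (fun i => sum_n (fun j => Cmult (A i j) (Eq q (Cmult (z i) (Cconj (z j))))) n) n)).
    intro; reflexivity.
    unfold s. apply sum_n_ext; intro i; apply sum_n_ext; intro j. unfold A, kernel_bq.
    symmetry. apply Cmult_assoc.
    apply (CS_sum n (fun i k => sum_n (fun j => Cmult (A i j) (tq q (Cmult (z i) (Cconj (z j))) k)) n)).
    intros i Hi.
    apply (CS_sum n (fun j k => Cmult (A i j) (tq q (Cmult (z i) (Cconj (z j))) k))).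
    intros j Hj. apply CS_scal. apply L2; auto. }
  set (d := fun i => Cmult (c i) (Cinv (Cminus 1 (Cmult (Cmult (RtoC s0) (z i)) (Cconj a))))).
  set (tau' := fun k => sum_n (fun i => sum_n (fun j =>
       Cmult (Cmult (d i) (Cconj (d j))) (tq q (Cmult (z i) (Cconj (z j))) k)) n) n).
  assert (Htau' : CS tau' (sum_n (fun i => sum_n (fun j =>
       Cmult (Cmult (d i) (Cconj (d j))) (Eq q (Cmult (z i) (Cconj (z j))))) n) n)).
  { apply (CS_sum n (fun i k => sum_n (fun j => Cmult (Cmult (d i) (Cconj (d j))) (tq q (Cmult (z i) (Cconj (z j))) k)) n)).
    intros i Hi.
    apply (CS_sum n (fun j k => Cmult (Cmult (d i) (Cconj (d j))) (tq q (Cmult (z i) (Cconj (z j))) k))).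
    intros j Hj. apply CS_scal. apply L2; auto. }
  set (U := fun k => Cmod (sum_n (fun i => Cmult (d i) (Cpow (z i) k)) n) ^ 2 / qfact q k).
  assert (HU : forall k, tau' k = RtoC (U k)).
  { intro k. pose proof (qfact_pos q k (proj1 Hq)) as Hf. unfold tau', U.
    transitivity (Cmult (RtoC (/ qfact q k)) (sum_n (fun i => sum_n (fun j =>
       Cmult (Cmult (d i) (Cpow (z i) k)) (Cconj (Cmult (d j) (Cpow (z j) k)))) n) n)).
    - rewrite <- sum_scal. apply sum_n_ext; intro i. rewrite <- sum_scal. apply sum_n_ext; intro j.
      unfold tq. rewrite Cmult_conj, Cpow_conj, Cpow_mult_l, RtoC_inv by lra.
      match goal with |- ?x = ?y => change (@eq C x y) end. field.
      apply RtoC_nz; lra.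
    - rewrite sum_herm. rewrite <- RtoC_mult. f_equal. unfold Rdiv. ring. }
  set (Aa := 1 - Cmod a ^ 2).
  assert (HT : forall k, tau k = RtoC (Aa * U k + (- Aa * (1 - q ^ S k)) * U (S k))).
  { intro k. rewrite RtoC_plus, (RtoC_mult Aa), (RtoC_mult (_ * _) (U (S k))), <- !HU.
    unfold tau, tau'.
    rewrite <- (sum_lin n (fun i => sum_n (fun j => Cmult (Cmult (d i) (Cconj (d j))) (tq q (Cmult (z i) (Cconj (z j))) k)) n)
                          (fun i => sum_n (fun j => Cmult (Cmult (d i) (Cconj (d j))) (tq q (Cmult (z i) (Cconj (z j))) (S k))) n)).
    apply sum_ext_loc; intros i Hi.
    rewrite <- (sum_lin n (fun j => Cmult (Cmult (d i) (Cconj (d j))) (tq q (Cmult (z i) (Cconj (z j))) k))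
                          (fun j => Cmult (Cmult (d i) (Cconj (d j))) (tq q (Cmult (z i) (Cconj (z j))) (S k)))).
    apply sum_ext_loc; intros j Hj.
    unfold A, d, Aa. apply P_id; auto. }
  destruct Htau as [HRe HIm]. split.
  - apply Im_zero. eapply is_series_ext; [|exact HIm]. intro k. cbv beta. rewrite HT. reflexivity.
  - apply (final_ineq U Aa q); auto.
    + unfold Aa. nra.
    + intro k. unfold U, Rdiv. apply Rmult_le_pos. apply pow2_ge_0.
      apply Rlt_le, Rinv_0_lt_compat, qfact_pos; lra.
    + destruct Htau' as [H1 _]. eexists. eapply is_series_ext; [|exact H1].
      intro k. cbv beta. rewrite HU. reflexivity.
    + eapply is_series_ext; [|exact HRe]. intro k. cbv beta. rewrite HT. reflexivity.
Qed.
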